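(* For all $L>0$ there exists $C>0$ such that for all $J\ge2$, all $\delta t>0$ with $\delta t/\delta x^2\le1/2$, and all $n\ge1$, $$\sum_{\ell=1}^{J-1}\Big|\delta t\sum_{k=0}^{n-1}(1+\delta t\,\lambda_\ell)^k\Big|^2\le C.$$
   Context: $\delta x=L/(J-1)$, $\lambda_\ell=-\frac4{\delta x^2}\sin^2\big(\frac{\ell\pi}{2J}\big)$ for $0\le\ell\le J-1$. *)

(* Defs.v *)
From Stdlib Require Import Reals.
Open Scope R_scope.

Definition dx (L : R) (J : nat) : R := L / (INR J - 1).

Definition lam (L : R) (J l : nat) : R :=
  - (4 / (dx L J) ^ 2) * (sin (INR l * PI / (2 * INR J))) ^ 2.

Fixpoint sum_range (f : nat -> R) (n : nat) : R :=
  match n with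
  | O => 0
  | S n' => sum_range f n' + f n'
  end.

(* Main.v *)
Require Import Defs.
From Stdlib Require Import Reals Lra Lia.
Open Scope R_scope.

Lemma sin_lb3 x : 0 <= x -> x <= 2 -> x / 3 <= sin x.
Proof.
  intros H0 H2.
  assert (Hp := PI_4). assert (Hp2 := PI2_3_2).
  destruct (sin_bound x 0 H0 ltac:(lra)) as [H _].
  unfold sin_approx in H. simpl in H. unfold sin_term in H. simpl in H.
  eapply Rle_trans; [|exact H]. unfold INR in H.
  simpl. field_simplify. nra.
Qed.

Lemma geo q n : sum_range (fun k => q ^ k) n * (1 - q) = 1 - q ^ n.
Proof.
  induction n as [|n IH]; simpl; [ring|].
  rewrite Rmult_plus_distr_r, IH. ring.
Qed.

Lemma sum_mono f g n : (forall l, (l < n)%nat -> f l <= g l) ->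
  sum_range f n <= sum_range g n.
Proof.
  induction n as [|n IH]; simpl; intros H; [lra|].
  apply Rplus_le_compat; [apply IH; intros; apply H; lia| apply H; lia].
Qed.

Lemma tele c m : (1 <= m)%nat ->
  sum_range (fun l => if (1 <=? l)%nat then c / INR l - c / INR (S l) else 0) m
  = c - c / INR m.
Proof.
  induction m as [|m IH]; intros Hm; [lia|].
  destruct m as [|m].
  - simpl. field.
  - change (sum_range (fun l => if (1 <=? l)%nat then c / INR l - c / INR (S l) else 0) (S m) + (if (1 <=? S m)%nat then c / INR (S m) - c / INR (S (S m)) else 0) = c - c / INR (S (S m))).
    rewrite IH by lia.
    replace ((1 <=? S m)%nat) with true by (symmetry; apply Nat.leb_le; lia).
    ring.
Qed.

Lemma term_bound L J dt n l : 0 < L -> (2 <= J)%nat -> 0 < dt ->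
  dt / (dx L J) ^ 2 <= 1 / 2 -> (1 <= l)%nat -> (l < J)%nat ->
  (Rabs (dt * sum_range (fun k => (1 + dt * lam L J l) ^ k) n)) ^ 2
  <= 128 * L^4 / INR l - 128 * L^4 / INR (S l).
Proof.
  intros HL HJ Hdt Hr Hl HlJ.
  set (j := INR J). set (m := INR l).
  assert (Hj : 2 <= j) by (unfold j; replace 2 with (INR 2) by (simpl; ring); apply le_INR; lia).
  assert (Hm : 1 <= m) by (unfold m; replace 1 with (INR 1) by (simpl; ring); apply le_INR; lia).
  assert (Hmj : m + 1 <= j) by (unfold m, j; rewrite <- S_INR; apply le_INR; lia).
  set (d := dx L J).
  assert (Hd : d * (j - 1) = L) by (unfold d, dx; fold j; field; lra).
  assert (Hdp : 0 < d) by (unfold d, dx; fold j; apply Rdiv_lt_0_compat; lra).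
  set (x := INR l * PI / (2 * INR J)).
  assert (HPI := PI_4). assert (HPI2 := PI2_3_2).
  set (t := m / j).
  assert (Hxt : x = t * (PI / 2)) by (unfold x, t; fold m j; field; lra).
  assert (Htj : t * j = m) by (unfold t; field; lra).
  assert (Ht0 : 0 <= t) by (unfold t; apply Rmult_le_pos; [lra| apply Rlt_le, Rinv_0_lt_compat; lra]).
  assert (Ht1 : t <= 1) by nra.
  assert (Hx0 : 0 <= x) by nra.
  assert (Hx2 : x <= PI / 2) by nra.
  set (s := sin x).
  assert (Hs : t / 2 <= s) by (unfold s; pose proof (sin_lb3 x Hx0 ltac:(lra)); nra).
  assert (Hs' : m <= 2 * j * s) by nra.
  assert (Hs2 : s ^ 2 <= 1) by (pose proof (SIN_bound x); fold s in H; nra).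
  set (r := dt / d ^ 2).
  assert (Hr0 : 0 <= r) by (unfold r; apply Rlt_le, Rdiv_lt_0_compat; [lra| apply pow_lt; lra]).
  set (q := 1 + dt * lam L J l).
  assert (Hq : q = 1 - 4 * r * s ^ 2) by (unfold q, r, lam, s, x; fold d; field; lra).
  set (S := sum_range (fun k => q ^ k) n).
  set (A := dt * S).
  assert (HA : A * (4 * s ^ 2) = (1 - q ^ n) * d ^ 2).
  { pose proof (geo q n) as G. fold S in G. rewrite Hq in G at 1.
    unfold A. rewrite <- G. unfold r. field. lra. }
  assert (Hrs : r * s^2 <= 1/2).
{ assert (0 <= s^2) by nra. assert (r <= 1/2) by exact Hr. nra. }
  assert (Hqa : Rabs q <= 1) by (apply Rabs_le; assert (0 <= r * s^2) by (assert (0 <= s^2) by nra; nra); lra).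
  assert (Hqn : Rabs (1 - q ^ n) <= 2).
  { eapply Rle_trans; [apply Rabs_triang|]. rewrite Rabs_Ropp, Rabs_R1, <- RPow_abs.
    assert (Rabs q ^ n <= 1) by (rewrite <- (pow1 n); apply pow_incr; split; [apply Rabs_pos|auto]). lra. }
  assert (HA2 : Rabs A * (4 * s ^ 2) <= 2 * d ^ 2).
  { replace (Rabs A * (4 * s^2)) with (Rabs (A * (4 * s^2))).
    2:{ rewrite Rabs_mult, (Rabs_right (4 * s^2)); auto. apply Rle_ge; nra. }
    rewrite HA, Rabs_mult, (Rabs_right (d^2)) by (apply Rle_ge; nra). nra. }
  assert (Hdj : d * j <= 2 * L) by nra.
  assert (Ha0 := Rabs_pos A).
  assert (Hm2 : Rabs A * m ^ 2 <= 8 * L ^ 2).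
  { assert (m^2 <= 4 * j^2 * s^2) by nra.
    assert (0 <= d * j) by nra.
    assert (d^2 * j^2 <= 4 * L^2) by nra. nra. }
  fold A.
  rewrite S_INR; fold m.
  replace (128 * L ^ 4 / m - 128 * L ^ 4 / (m + 1)) with (128 * L^4 / (m * (m+1))) by (field; lra).
  apply (Rmult_le_reg_r (m * (m+1))); [nra|].
  unfold Rdiv. rewrite Rmult_assoc, Rinv_l, Rmult_1_r by nra.
  assert ((Rabs A * m^2)^2 <= (8 * L^2)^2) by (apply pow_incr; nra).
  assert (m * (m + 1) <= 2 * m^2) by nra. assert (1 <= m^2) by nra. assert (m^2 <= m^4) by (replace (m^4) with (m^2*m^2) by ring; nra).
  assert (0 <= Rabs A ^ 2) by nra.
  nra.
Qed.

Theorem proposition3p4 :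
  forall L : R, 0 < L ->
  exists C : R, 0 < C /\
    forall (J : nat) (dt : R) (n : nat),
      (2 <= J)%nat -> 0 < dt -> dt / (dx L J) ^ 2 <= 1 / 2 -> (1 <= n)%nat ->
      sum_range (fun l =>
          if (1 <=? l)%nat then
            (Rabs (dt * sum_range (fun k => (1 + dt * lam L J l) ^ k) n)) ^ 2
          else 0) J
      <= C.
Proof.
  intros L HL. exists (128 * L^4). split; [assert (0 < L^4) by (apply pow_lt; lra); lra|].
  intros J dt n HJ Hdt Hr Hn.
  eapply Rle_trans.
  - apply (sum_mono _ (fun l => if (1 <=? l)%nat then 128 * L^4 / INR l - 128 * L^4 / INR (S l) else 0)).
    intros l Hl. destruct (1 <=? l)%nat eqn:E; [|lra].
    apply Nat.leb_le in E. apply term_bound; auto.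
  - rewrite tele by lia.
    assert (0 < 128 * L^4 / INR J).
    { apply Rdiv_lt_0_compat; [assert (0 < L^4) by (apply pow_lt; lra); lra| apply lt_0_INR; lia]. }
    lra.
Qed.
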